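(* Let $\mathcal{D}=(X,\mathcal{G},\mathcal{B})$ be an $\mathrm{STD}_\lambda[k;g]$, so that $v=|X|=\lambda g^2$ and $k=\lambda g$, where $\lambda\ge1$, $g\ge2$ and $(\lambda,g)\notin\{(1,2),(1,3),(2,2)\}$. Then there exists a semi-resolving set for the points of $\mathcal{D}$ of size $\left\lceil\frac{v\log v}{k-\lambda}\right\rceil$, i.e. a set $S_\mathcal{B}\subseteq\mathcal{B}$ of that size such that for every pair of distinct points $x,y\in X$ some block of $S_\mathcal{B}$ contains exactly one of $x,y$ (equivalently, is at different distances from $x$ and $y$ in the incidence graph).
   Context: A transversal design $\mathrm{TD}_\lambda[k;g]$ ($g\ge2$) is a triple $(X,\mathcal{G},\mathcal{B})$ where $X$ is a set of $kg$ points, $\mathcal{G}$ is a partition of $X$ into $k$ point classes of size $g$, and $\mathcal{B}$ is a family of $k$-subsets of $X$ (blocks) such that each block contains exactly one point of each point class and any two points from distinct point classes lie in exactly $\lambda$ blocks. It is symmetric (an $\mathrm{STD}_\lambda[k;g]$) if its dual (interchanging points and blocks) is also a $\mathrm{TD}_\lambda[k;g]$; then $k=\lambda g$ and $|X|=|\mathcal{B}|=\lambda g^2$. The incidence graph is the bipartite graph on $X\cup\mathcal{B}$ with $x$ adjacent to $B$ iff $x\in B$. $\log$ is the natural logarithm. *)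

(* Defs.v *)
From HB Require Import structures.
From mathcomp Require Import all_boot all_order all_algebra.

Set Implicit Arguments. Unset Strict Implicit. Unset Printing Implicit Defensive.

(* Transversal design TD_lambda[k;g] given by an incidence relation
   [inc : P -> Bk -> bool] between a finite point type [P] and a finite
   block type [Bk] (blocks are indexed, so repeated blocks are allowed). *)
Definition block_set (P Bk : finType) (inc : P -> Bk -> bool) (B : Bk) : {set P} :=
  [set x | inc x B].

Definition is_TD (P Bk : finType) (inc : P -> Bk -> bool) (lam k g : nat) : Prop :=
  2 <= g /\
  exists G : {set {set P}},
    [/\ partition G [set: P],
        #|G| = k &
        (forall C, C \in G -> #|C| = g)] /\
    [/\
        (forall B : Bk, #|block_set inc B| = k),
        (forall (B : Bk) C, C \in G -> #|block_set inc B :&: C| = 1) &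
        (forall x y : P, pblock G x != pblock G y ->
           #|[set B : Bk | inc x B && inc y B]| = lam)].

Definition dual_inc (P Bk : finType) (inc : P -> Bk -> bool) : Bk -> P -> bool :=
  fun B x => inc x B.

Definition is_STD (P Bk : finType) (inc : P -> Bk -> bool) (lam k g : nat) : Prop :=
  is_TD inc lam k g /\ is_TD (dual_inc inc) lam k g.

Definition semi_resolving_points (P Bk : finType) (inc : P -> Bk -> bool)
    (S : {set Bk}) : Prop :=
  forall x y : P, x != y -> exists2 B, B \in S & inc x B != inc y B.

(* Main.v *)
From mathcomp Require Import all_boot all_order all_algebra.
From mathcomp Require Import all_classical all_reals all_analysis.
From mathcomp Require Import ring lra zify.
Require Import Defs.
Import Order.TTheory GRing.Theory Num.Theory.
Local Open Scope ring_scope.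

Lemma expR_ge_poly (R : realType) (x : R) : 0 <= x ->
  1 + x + x^+2/2 + x^+3/6 + x^+4/24 <= expR x.
Proof.
move=> x0.
have H := @nondecreasing_cvgn_le R (series (exp_coeff x)) _ (is_cvg_series_exp_coeff x) 5.
rewrite /expR; apply: le_trans (H _); last first.
  apply: nondecreasing_series => n _ _; exact: exp_coeff_ge0.
rewrite /series /= !big_nat_recr //= big_geq // /exp_coeff /=.
rewrite /factorial /= expr0 expr1 !divr1 add0r.
rewrite le_eqVlt; apply/orP; left; apply/eqP.
ring.
Qed.
Lemma nat_poly (l m : nat) : (1 <= l)%N -> (1 <= m)%N ->
  ~ ((l, m) = (1, 1)%N \/ (l, m) = (1, 2)%N \/ (l, m) = (2, 1)%N) ->
  (24 * (l * (m+1)^2) <= 24 + 24 * (l * m) + 12 * (l * m)^2 + 4 * (l * m)^3 + (l * m)^4)%N.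
Proof.
move=> l1 m1 hx.
have H1 : ~ (l = 1 /\ m = 1)%N by move=> [? ?]; subst; apply: hx; left.
have H2 : ~ (l = 1 /\ m = 2)%N by move=> [? ?]; subst; apply: hx; right; left.
have H3 : ~ (l = 2 /\ m = 1)%N by move=> [? ?]; subst; apply: hx; right; right.
case: (eqVneq l 1%N) => [El|ln1].
  have m3 : (3 <= m)%N by lia.
  subst l; rewrite !mul1n; nia.
case: (eqVneq l 2%N) => [El|ln2].
  have m2 : (2 <= m)%N by lia.
  subst l; nia.
have l3 : (3 <= l)%N by lia.
set x := (l * m)%N.
have x3 : (3 <= x)%N by rewrite /x; nia.
have h1 : (3 * (l * m^2) <= x^2)%N by rewrite /x; nia.
have h2 : (l <= x)%N by rewrite /x; nia.
have h3 : (36 * x <= 4 * x^3)%N by nia.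
nia.
Qed.

Lemma ln_bound (R : realType) (l g : nat) : (1 <= l)%N -> (2 <= g)%N ->
  ~ ((l, g) = (1, 2)%N \/ (l, g) = (1, 3)%N \/ (l, g) = (2, 2)%N) ->
  ln ((l * g ^ 2)%:R : R) <= (l * g - l)%:R.
Proof.
move=> l1 g2 hx.
have hm : ~ ((l, g.-1) = (1, 1)%N \/ (l, g.-1) = (1, 2)%N \/ (l, g.-1) = (2, 1)%N).
  case: g g2 hx => [|[|g]] //= _ hx [[? ?]|[[? ?]|[? ?]]]; subst; apply: hx.
  - by left.
  - by right; left.
  - by right; right.
have hg1 : (1 <= g.-1)%N by lia.
have := @nat_poly l g.-1 l1 hg1 hm.
have -> : (g.-1 + 1 = g)%N by lia.
have -> : (l * g - l = l * g.-1)%N by case: g g2 {hm hg1} hx => // g _ _; rewrite mulnS /=; lia.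
set x := (l * g.-1)%N.
rewrite -(ler_nat R) => H.
have lg0 : (0 < l * g ^ 2)%N by rewrite muln_gt0 expn_gt0; lia.
rewrite -[X in _ <= X]expRK ler_ln ?posrE ?expR_gt0 ?ltr0n //.
apply: le_trans (@expR_ge_poly R _ (ler0n R x)).
lra.
Qed.
Lemma bin_ratio (v d N : nat) :
  ('C(v - d, N) * v ^ N <= 'C(v, N) * (v - d) ^ N)%N.
Proof.
elim: N => [|N IH]; first by rewrite !bin0 !expn0.
rewrite -(leq_pmul2l (ltn0Sn N)).
have E1 : (N.+1 * ('C(v - d, N.+1) * v ^ N.+1) = ((v - d - N) * v) * ('C(v - d, N) * v ^ N))%N.
  by rewrite mulnA mul_bin_left expnS; ring.
have E2 : (N.+1 * ('C(v, N.+1) * (v - d) ^ N.+1) = ((v - N) * (v - d)) * ('C(v, N) * (v - d) ^ N))%N.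
  by rewrite mulnA mul_bin_left expnS; ring.
rewrite E1 E2; apply: leq_mul => //.
have [h|h] := leqP N (v - d); nia.
Qed.

Lemma prob_bound (R : realType) (v d N : nat) : (0 < v)%N -> (d <= v)%N ->
  2 * (v%:R : R) * ln (v%:R : R) <= d%:R * N%:R ->
  ('C(v - d, N) * v ^ 2 <= 'C(v, N))%N.
Proof.
move=> v0 dv H.
have vR : 0 < (v%:R : R) by rewrite ltr0n.
have B := bin_ratio v d N.
move: B; rewrite -(ler_nat R) !natrM !GRing.natrX => B.
set C1 := ('C(v - d, N))%:R : R in B *.
set C := ('C(v, N))%:R : R in B *.
set q := (v - d)%:R / (v%:R : R).
have q0 : 0 <= q by rewrite divr_ge0 ?ler0n.
have qe : q <= expR (- (d%:R / v%:R)).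
  apply: le_trans (expR_ge1Dx _).
  rewrite /q natrB // mulrBl divff ?gt_eqF //.
have hC1 : C1 <= C * q ^+ N.
  by rewrite /q exprMn exprVn mulrA ler_pdivlMr ?exprn_gt0.
have hq : q ^+ N * (v%:R ^+ 2) <= 1.
  apply: le_trans (_ : expR (- (d%:R / v%:R)) ^+ N * v%:R ^+ 2 <= 1).
    apply: ler_wpM2r; first by rewrite exprn_ge0 ?ltW.
    by apply: lerXn2r => //; rewrite nnegrE ?expR_ge0.
  rewrite -expRM_natr -[v%:R in X in _ * X ^+ 2]lnK ?posrE // -expRM_natr -expRD.
  rewrite expR_le1.
  rewrite -(@ler_pM2r _ v%:R) // mul0r mulrDl.
  have -> : - (d%:R / v%:R) * N%:R * v%:R = - (d%:R * N%:R) :> R.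
    by field; rewrite gt_eqF.
  lra.
rewrite -(ler_nat R) natrM GRing.natrX -/C1 -/C.
have C0 : 0 <= C by rewrite ler0n.
apply: le_trans (_ : C * q ^+ N * v%:R ^+ 2 <= C).
  by rewrite ler_wpM2r ?exprn_ge0 ?ler0n.
rewrite -mulrA; nra.
Qed.

Lemma card_bigcup_leq {I T : finType} (A : {set I}) (F : I -> {set T}) :
  (#|\bigcup_(i in A) F i| <= \sum_(i in A) #|F i|)%N.
Proof.
elim/big_rec2: _ => [|i m U _ IH]; first by rewrite cards0.
apply: leq_trans (leq_card_setU _ _).1 _.
by rewrite leq_add2l.
Qed.

Theorem theorem3p3 (R : realType) (P Bk : finType) (inc : P -> Bk -> bool)
    (lam k g : nat) :
  is_STD inc lam k g ->
  #|P| = (lam * g ^ 2)%N -> k = (lam * g)%N ->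
  (1 <= lam)%N -> (2 <= g)%N ->
  ~ ((lam, g) = (1, 2)%N \/ (lam, g) = (1, 3)%N \/ (lam, g) = (2, 2)%N) ->
  exists S : {set Bk},
    (#|S|%:Z = Num.ceil ((#|P|%:R : R) * ln (#|P|%:R : R) / (k%:R - lam%:R)))
    /\ semi_resolving_points inc S.
Proof.
move=> [[_ [G [[partG _ _] [_ blk1 blkl]]]] [_ [G' [[partG' cardG' sizeG'] [deg _ _]]]]].
move=> hP hk l1 g2 hx.
set v := #|P|.
have hB : #|Bk| = v.
  rewrite -cardsT (card_partition partG') (eq_bigr (fun _ => g)); last first.
    by move=> A /sizeG'.
  by rewrite sum_nat_const cardG' /v hP hk; lia.
have v0 : (0 < v)%N by rewrite /v hP muln_gt0 expn_gt0; lia.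
have klam : (lam <= k)%N by rewrite hk; nia.
set d := (2 * (k - lam))%N.
have dv : (d <= v)%N by rewrite /d /v hP hk; nia.
have degx : forall x : P, #|[set B | inc x B]| = k.
  move=> x; have := deg x; by rewrite /block_set /dual_inc.
have common : forall x y : P, x != y -> (#|[set B | inc x B && inc y B]| <= lam)%N.
  move=> x y nxy.
  case: (eqVneq (finset.pblock G x) (finset.pblock G y)) => [E|ne]; last by rewrite blkl.
  suff -> : [set B | inc x B && inc y B] = finset.set0 by rewrite cards0.
  apply/setP => B; rewrite !inE.
  apply/negbTE/negP => /andP [iB jB].
  have cov : finset.cover G = [set: P] by case/and3P: partG => /eqP.
  have Gx : finset.pblock G x \in G by rewrite finset.pblock_mem // cov inE.
  have xC : x \in finset.pblock G x by rewrite finset.mem_pblock cov inE.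
  have yC : y \in finset.pblock G x by rewrite E finset.mem_pblock cov inE.
  have := blk1 B _ Gx.
  have sub : [set x; y] \subset block_set inc B :&: finset.pblock G x.
    apply/fintype.subsetP => z; rewrite !inE => /orP [] /eqP ->.
    - by rewrite iB xC.
    - by rewrite jB yC.
  have := subset_leq_card sub; rewrite cards2 nxy => h1 h2.
  by rewrite h2 in h1.
set D := fun x y : P => [set B | inc x B != inc y B].
have Dbig : forall x y : P, x != y -> (d <= #|D x y|)%N.
  move=> x y nxy.
  set X := [set B | inc x B]; set Y := [set B | inc y B].
  have E : D x y = (X :\: Y) :|: (Y :\: X).
    by apply/setP => B; rewrite !inE; case: (inc x B); case: (inc y B).
  have E0 : (X :\: Y) :&: (Y :\: X) = finset.set0.
    by apply/setP => B; rewrite !inE; case: (inc x B); case: (inc y B).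
  have EI : X :&: Y = [set B | inc x B && inc y B] by apply/setP => B; rewrite !inE.
  rewrite E cardsU E0 cards0 subn0 !cardsD [Y :&: X]finset.setIC EI /X /Y !degx.
  move: (common x y nxy); rewrite /d; move: (#|[set B | inc x B && inc y B]|) => c hc; rewrite mul2n -addnn; apply: leq_add; exact: leq_sub2l.
have kl_pos : (0 < k - lam)%N by rewrite hk; nia.
have kR : (k%:R - lam%:R : R) = (k - lam)%N%:R by rewrite natrB.
rewrite kR.
set X := (v%:R : R) * ln (v%:R : R) / (k - lam)%N%:R.
have vR : (0 < (v%:R : R)) by rewrite ltr0n.
have lnv0 : 0 <= ln (v%:R : R) by rewrite ln_ge0 // ler1n.
have klR : (0 < ((k - lam)%N%:R : R)) by rewrite ltr0n.
have X0 : 0 <= X.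
  by apply: divr_ge0; [apply: mulr_ge0 => //; exact: ltW | exact: ltW].
have c0 : (0 <= Num.ceil X)%R by rewrite ceil_ge0; lra.
set N := `|Num.ceil X|%N.
have NE : (N%:Z = Num.ceil X) by rewrite /N gez0_abs.
have XN : X <= N%:R.
  have := ceil_ge X; rewrite -NE. by [].
have Nv : (N <= v)%N.
  rewrite -(lez_nat) NE ceil_le_int.
  rewrite /X ler_pdivrMr // [_ %:~R]/=.
  have Hl := @ln_bound R lam g l1 g2 hx.
  rewrite -hP -/v -hk in Hl.
  have -> : ((v%:Z)%:~R : R) = v%:R by [].
  nra.
have Hprob : 2 * (v%:R : R) * ln (v%:R : R) <= d%:R * N%:R.
  rewrite /d natrM.
  move: XN; rewrite /X ler_pdivrMr // => XN.
  nra.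
have PB := @prob_bound R v d N v0 dv Hprob.
set c := 'C(v - d, N) in PB.
have CN : (0 < 'C(v, N))%N by rewrite bin_gt0.
have key : (v * v.-1 * c < 'C(v, N))%N.
  case: (posnP c) => [->|cpos]; first by rewrite muln0.
  apply: leq_trans PB.
  have hv : (v.-1.+1 = v)%N by rewrite prednK.
  rewrite -hv; nia.
set W := [set S : {set Bk} | #|S| == N].
have cW : #|W| = 'C(v, N) by rewrite /W card_draws hB.
set F := fun x y => [set S : {set Bk} | (S \subset ~: D x y) & #|S| == N].
set Bad := \bigcup_(x in [set: P]) \bigcup_(y in [set~ x]) F x y.
have cF : forall x y, x != y -> (#|F x y| <= c)%N.
  move=> x y nxy; rewrite /F cards_draws; apply: leq_bin2l.
  have := cardsC (D x y); rewrite hB => h; have := Dbig x y nxy; lia.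
have cBad : (#|Bad| <= v * v.-1 * c)%N.
  rewrite /Bad; apply: leq_trans (card_bigcup_leq _ _) _.
  apply: (@leq_trans (\sum_(x in [set: P]) (v.-1 * c))%N).
    apply: leq_sum => x _; apply: leq_trans (card_bigcup_leq _ _) _.
    apply: (@leq_trans (\sum_(y in [set~ x]) c)%N).
      by apply: leq_sum => y; rewrite !inE eq_sym => /cF.
    by rewrite sum_nat_const cardsC1.
  by rewrite sum_nat_const cardsT mulnA.
have : ~~ (W \subset Bad).
  apply/negP => sub; have := leq_trans (subset_leq_card sub) cBad.
  by rewrite cW leqNgt key.
case/fintype.subsetPn => S SW SBad.
rewrite inE in SW.
exists S; split.
  by move/eqP: SW => ->; exact: NE.
move=> x y nxy.
have : S \notin F x y.
  apply: contra SBad => SF.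
  apply/finset.bigcupP; exists x; first by rewrite inE.
  by apply/finset.bigcupP; exists y => //; rewrite !inE eq_sym.
rewrite /F inE SW andbT.
case/fintype.subsetPn => B BS BnD.
by exists B => //; move: BnD; rewrite !inE negbK.
Qed.
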